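(* Let $\mathcal{H}$ be a Hilbert space, $\{\mathcal{H}_i : i\in I\}$ a sequence of Hilbert spaces ($I\subseteq\mathbb{Z}$), and let $\Lambda=\{\Lambda_i\in\mathcal{L}(\mathcal{H},\mathcal{H}_i): i\in I\}$ be a $g$-frame for $\mathcal{H}$ with $g$-frame operator $S_\Lambda f=\sum_{i\in I}\Lambda_i^*\Lambda_i f$. Let $C,C'\in\mathcal{GL}^+(\mathcal{H})$ be such that $C$ and $C'$ commute with each other and each commutes with $S_\Lambda$. Then $\Lambda$ is a $(C,C')$-controlled $g$-frame for $\mathcal{H}$.
   Context: $\mathcal{L}(\mathcal{H},\mathcal{K})$ denotes the bounded linear operators from $\mathcal{H}$ to $\mathcal{K}$. $\mathcal{GL}^+(\mathcal{H})$ denotes the set of positive bounded operators on $\mathcal{H}$ (i.e. $\langle Tf,f\rangle>0$ for $f\neq 0$) having a bounded inverse. A family $\Lambda=\{\Lambda_i\in\mathcal{L}(\mathcal{H},\mathcal{H}_i)\}_{i\in I}$ is a $g$-frame for $\mathcal{H}$ if there are constants $0<A\le B<\infty$ with $A\|f\|^2\le\sum_{i\in I}\|\Lambda_i f\|^2\le B\|f\|^2$ for all $f\in\mathcal{H}$; it is a $g$-Bessel sequence if the upper inequality holds. For $C,C'\in\mathcal{GL}^+(\mathcal{H})$, $\Lambda$ is a $(C,C')$-controlled $g$-frame if $\Lambda$ is a $g$-Bessel sequence and there exist constants $A>0$, $B<\infty$ such that $A\|f\|^2\le\sum_{i\in I}\langle\Lambda_i Cf,\Lambda_i C'f\rangle\le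 B\|f\|^2$ for all $f\in\mathcal{H}$. *)

(* Defs.v *)
From HB Require Import structures.
From mathcomp Require Import all_boot all_order all_algebra.
From mathcomp Require Import reals complex.

Set Implicit Arguments.
Unset Strict Implicit.
Unset Printing Implicit Defensive.

Import Order.TTheory GRing.Theory Num.Theory.
Local Open Scope ring_scope.

Section HilbertDefs.
Variable R : realType.
Local Notation C := R[i].

Record inner_product (V : lmodType C) := InnerProduct {
  ip : V -> V -> C;
  ip_linear : forall (a : C) (x y z : V), ip (a *: x + y) z = a * ip x z + ip y z;
  ip_conj : forall x y : V, ip y x = (ip x y)^*;
  ip_ge0 : forall x : V, 0 <= ip x x;
  ip_eq0 : forall x : V, ip x x = 0 -> x = 0 }.

Definition hnorm (V : lmodType C) (p : inner_product V) (x : V) : R :=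
  Num.sqrt (complex.Re (ip p x x)).

Definition cauchy_seq (V : lmodType C) (nrm : V -> R) (u : nat -> V) :=
  forall e : R, 0 < e -> exists N : nat,
    forall m n : nat, (N <= m)%N -> (N <= n)%N -> nrm (u m - u n) < e.

Definition seq_converges_to (V : lmodType C) (nrm : V -> R) (u : nat -> V) (l : V) :=
  forall e : R, 0 < e -> exists N : nat, forall n : nat, (N <= n)%N -> nrm (u n - l) < e.

Record hilbert (V : lmodType C) := Hilbert {
  hip : inner_product V;
  hcomplete : forall u : nat -> V, cauchy_seq (hnorm hip) u ->
                exists l : V, seq_converges_to (hnorm hip) u l }.

Definition inner (V : lmodType C) (hV : hilbert V) : V -> V -> C := ip (hip hV).
Definition norm_h (V : lmodType C) (hV : hilbert V) : V -> R := hnorm (hip hV).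

(* Unconditional summation over an index set I of integers:
   the net of finite partial sums (over finite subsets of I) converges to s. *)
Definition has_sum (K : numDomainType) (V : zmodType) (nrm : V -> K)
    (I : int -> Prop) (a : int -> V) (s : V) :=
  forall e : K, 0 < e -> exists F0 : seq int, (forall i, i \in F0 -> I i) /\
    forall F : seq int, uniq F -> (forall i, i \in F -> I i) ->
      (forall i, i \in F0 -> i \in F) -> nrm (\sum_(i <- F) a i - s) < e.

Definition bounded_linear (V W : lmodType C) (hV : hilbert V) (hW : hilbert W)
    (T : V -> W) :=
  (forall (a : C) (x y : V), T (a *: x + y) = a *: T x + T y) /\
  exists M : R, forall x : V, norm_h hW (T x) <= M * norm_h hV x.

Definition is_adjoint (V W : lmodType C) (hV : hilbert V) (hW : hilbert W)
    (T : V -> W) (Ts : W -> V) :=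
  forall (x : V) (y : W), inner hW (T x) y = inner hV x (Ts y).

Definition GLplus (H : lmodType C) (hH : hilbert H) (T : H -> H) :=
  bounded_linear hH hH T /\
  (forall f : H, f <> 0 -> 0 < inner hH (T f) f) /\
  exists Ti : H -> H, bounded_linear hH hH Ti /\ cancel T Ti /\ cancel Ti T.

Section GFrames.
Variables (H : lmodType C) (hH : hilbert H) (I : int -> Prop)
  (Hi : int -> lmodType C) (hHi : forall i, hilbert (Hi i))
  (L : forall i, H -> Hi i).

Definition g_bessel :=
  (forall i, I i -> bounded_linear hH (hHi i) (L i)) /\
  exists B : R, forall f : H, exists s : R,
    has_sum (@Num.norm R R) I (fun i => norm_h (hHi i) (L i f) ^+ 2) s /\
    s <= B * norm_h hH f ^+ 2.

Definition g_frame :=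
  (forall i, I i -> bounded_linear hH (hHi i) (L i)) /\
  exists A B : R, 0 < A /\ A <= B /\ forall f : H, exists s : R,
    has_sum (@Num.norm R R) I (fun i => norm_h (hHi i) (L i f) ^+ 2) s /\
    A * norm_h hH f ^+ 2 <= s /\ s <= B * norm_h hH f ^+ 2.

Definition g_frame_operator (S : H -> H) :=
  exists Ls : forall i, Hi i -> H,
    (forall i, I i -> is_adjoint hH (hHi i) (L i) (Ls i)) /\
    forall f : H, has_sum (norm_h hH) I (fun i => Ls i (L i f)) (S f).

Definition controlled_g_frame (Cop C'op : H -> H) :=
  g_bessel /\
  exists A B : R, 0 < A /\ forall f : H, exists s : C,
    has_sum (@Num.norm C C) I
      (fun i => inner (hHi i) (L i (Cop f)) (L i (C'op f))) s /\
    ((A * norm_h hH f ^+ 2)%:C)%C <= s /\ s <= ((B * norm_h hH f ^+ 2)%:C)%C.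

End GFrames.
End HilbertDefs.

(* Main.v *)
Require Import Defs.
From mathcomp Require Import all_boot all_order all_algebra.
From mathcomp Require Import reals complex.
From mathcomp Require Import ring lra.
Import Order.TTheory GRing.Theory Num.Theory.
Local Open Scope ring_scope.
Unset Strict Implicit.
Unset Printing Implicit Defensive.

Set Implicit Arguments.

Section Basic.
Variable R : realType.
Local Notation C := R[i].
Local Notation RC x := ((x%:C)%C : C).

Lemma ge0_realC (z : C) : 0 <= z -> z = RC (complex.Re z).
Proof. by case: z => a b; rewrite lecE /= => /andP[/eqP -> _]. Qed.

Lemma ge0_Re (z : C) : 0 <= z -> 0 <= complex.Re z.
Proof. by case: z => a b; rewrite lecE /= => /andP[_ ->]. Qed.

Lemma rcD (a b : R) : RC (a + b) = RC a + RC b.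
Proof. by rewrite rmorphD. Qed.
Lemma rcM (a b : R) : RC (a * b) = RC a * RC b.
Proof. by rewrite rmorphM. Qed.
Lemma rcN (a : R) : RC (- a) = - RC a.
Proof. by rewrite rmorphN. Qed.
Lemma rcB (a b : R) : RC (a - b) = RC a - RC b.
Proof. by rewrite rmorphB. Qed.
Lemma rcX (a : R) n : RC (a ^+ n) = RC a ^+ n.
Proof. by rewrite rmorphXn. Qed.
Lemma conj_rc (a : R) : (RC a)^* = RC a.
Proof. exact: conjc_real. Qed.
Lemma rc_le (a b : R) : (RC a <= RC b) = (a <= b).
Proof. exact: lecR. Qed.
Lemma rc_lt (a b : R) : (RC a < RC b) = (a < b).
Proof. exact: ltcR. Qed.
Lemma normC_sq (b : C) : b * b^* = RC (complex.Re b ^+ 2 + complex.Im b ^+ 2).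
Proof. by rewrite -normCK normc_def -rcX sqr_sqrtr // addr_ge0 // sqr_ge0. Qed.
Lemma normC_rc (a : R) : `|RC a| = RC `|a|.
Proof. by rewrite normc_def /= expr0n /= addr0 sqrtr_sqr. Qed.
End Basic.

Set Implicit Arguments.

Lemma quad_disc (R : realType) (B a c : R) : 0 <= B -> 0 <= a -> 0 <= c ->
  (forall t : R, 0 <= t ^+ 2 * B * c - 2 * t * B + a) -> B <= a * c.
Proof.
move=> B0 a0 c0 H; rewrite leNgt; apply/negP => Hlt.
have Bp : 0 < B by apply: le_lt_trans Hlt; exact: mulr_ge0.
have [c0'|cp] := eqVneq c 0%R.
  have := H ((a + 1) / (2 * B)); rewrite c0' mulr0 sub0r.
  have -> : 2 * ((a + 1) / (2 * B)) * B = a + 1.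
    by field; rewrite gt_eqF.
  lra.
have cp' : 0 < c by rewrite lt_neqAle eq_sym cp.
have := H (1 / c).
have -> : (1 / c) ^+ 2 * B * c - 2 * (1 / c) * B + a = a - B / c.
  by field.
have : a * c < B by [].
move=> h1 h2.
have : B / c <= a by lra.
rewrite ler_pdivrMr //; lra.
Qed.

Set Implicit Arguments.

Section Form.
Variable R : realType.
Local Notation C := R[i].
Local Notation RC x := ((x%:C)%C : C).
Variable V : lmodType C.
Variable q : V -> V -> C.
Hypothesis qlin : forall (a : C) (x y z : V), q (a *: x + y) z = a * q x z + q y z.
Hypothesis qherm : forall x y : V, q y x = (q x y)^*.
Hypothesis qpos : forall x : V, 0 <= q x x.

Lemma q0l z : q 0 z = 0.
Proof.
have := qlin 1 0 0 z; rewrite scaler0 addr0 mul1r => /eqP.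
by rewrite -subr_eq0 opprD addrA subrr sub0r oppr_eq0 => /eqP.
Qed.
Lemma qDl x y z : q (x + y) z = q x z + q y z.
Proof. by rewrite -{1}(scale1r x) qlin mul1r. Qed.
Lemma qZl a x z : q (a *: x) z = a * q x z.
Proof. by rewrite -(addr0 (a *: x)) qlin q0l addr0. Qed.
Lemma qNl x z : q (- x) z = - q x z.
Proof. by rewrite -scaleN1r qZl mulN1r. Qed.
Lemma qBl x y z : q (x - y) z = q x z - q y z.
Proof. by rewrite qDl qNl. Qed.
Lemma qDr x y z : q z (x + y) = q z x + q z y.
Proof. by rewrite [LHS]qherm qDl rmorphD (qherm x z) (qherm y z). Qed.
Lemma qZr a x z : q z (a *: x) = a^* * q z x.
Proof. by rewrite [LHS]qherm qZl rmorphM (qherm x z). Qed.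
Lemma qNr x z : q z (- x) = - q z x.
Proof. by rewrite [LHS]qherm qNl rmorphN (qherm x z). Qed.
Lemma qBr x y z : q z (x - y) = q z x - q z y.
Proof. by rewrite qDr qNr. Qed.
Lemma q0r z : q z 0 = 0.
Proof. by rewrite qherm q0l rmorph0. Qed.

Lemma qxx_real x : q x x = RC (complex.Re (q x x)).
Proof. exact: ge0_realC. Qed.

Lemma CS_form x y :
  complex.Re (q x y) ^+ 2 + complex.Im (q x y) ^+ 2 <=
  complex.Re (q x x) * complex.Re (q y y).
Proof.
set b := q x y.
apply: quad_disc; first by rewrite addr_ge0 // sqr_ge0.
- exact: ge0_Re.
- exact: ge0_Re.
move=> t.
have := qpos (x - (RC t * b) *: y).
rewrite qBl !qBr !qZl !qZr rmorphM /= conj_rc.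
rewrite (qherm x y) -/b.
rewrite (qxx_real x) (qxx_real y).
set ar := complex.Re (q x x); set cr := complex.Re (q y y).
rewrite /= -/(complex.Re b ^+ 2 + complex.Im b ^+ 2).
set B := (complex.Re b ^+ 2 + complex.Im b ^+ 2).
move=> h; rewrite -rc_le.
have -> : RC (t ^+ 2 * B * cr - 2 * t * B + ar) =
  RC t ^+ 2 * RC B * RC cr - 2%:R * RC t * RC B + RC ar.
  by rewrite rcD rcB !rcM expr2 rmorph_nat.
have -> : RC 0 = 0 by rewrite rmorph0.
rewrite /B -normC_sq.
by move: h; congr (_ <= _); ring.
Qed.
End Form.

Set Implicit Arguments.

Lemma sq_le (R : realType) (a b : R) : 0 <= b -> a ^+ 2 <= b ^+ 2 -> a <= b.
Proof. move=> b0 h; rewrite leNgt; apply/negP => ab; nra. Qed.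

Section Hil.
Variable R : realType.
Local Notation C := R[i].
Local Notation RC x := ((x%:C)%C : C).
Variable V : lmodType C.
Variable hV : hilbert V.
Local Notation "<< x , y >>" := (inner hV x y).
Local Notation nx := (norm_h hV).

Lemma iplin (a : C) (x y z : V) : << a *: x + y, z >> = a * << x, z >> + << y, z >>.
Proof. exact: ip_linear. Qed.
Lemma ipherm (x y : V) : << y, x >> = (<< x, y >>)^*.
Proof. exact: ip_conj. Qed.
Lemma ippos (x : V) : 0 <= << x, x >>.
Proof. exact: ip_ge0. Qed.

Lemma iD_l x y z : << x + y, z >> = << x, z >> + << y, z >>.
Proof. exact: (qDl iplin). Qed.
Lemma iZ_l a x z : << a *: x, z >> = a * << x, z >>.
Proof. exact: (qZl iplin). Qed.
Lemma iN_l x z : << - x, z >> = - << x, z >>.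
Proof. exact: (qNl iplin). Qed.
Lemma iB_l x y z : << x - y, z >> = << x, z >> - << y, z >>.
Proof. exact: (qBl iplin). Qed.
Lemma i0_l z : << 0, z >> = 0.
Proof. exact: (q0l iplin). Qed.
Lemma iD_r x y z : << z, x + y >> = << z, x >> + << z, y >>.
Proof. exact: (qDr iplin ipherm). Qed.
Lemma iZ_r a x z : << z, a *: x >> = a^* * << z, x >>.
Proof. exact: (qZr iplin ipherm). Qed.
Lemma iN_r x z : << z, - x >> = - << z, x >>.
Proof. exact: (qNr iplin ipherm). Qed.
Lemma iB_r x y z : << z, x - y >> = << z, x >> - << z, y >>.
Proof. exact: (qBr iplin ipherm). Qed.
Lemma i0_r z : << z, 0 >> = 0.
Proof. exact: (q0r iplin ipherm). Qed.

Lemma nx_ge0 x : 0 <= nx x.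
Proof. exact: sqrtr_ge0. Qed.
Lemma nx_sq x : nx x ^+ 2 = complex.Re << x, x >>.
Proof. by rewrite /norm_h /hnorm sqr_sqrtr // ge0_Re // ippos. Qed.
Lemma ixx x : << x, x >> = RC (nx x ^+ 2).
Proof. by rewrite nx_sq; apply: ge0_realC; exact: ippos. Qed.
Lemma nx_eq0 x : nx x = 0 -> x = 0.
Proof.
move=> h; apply: (@ip_eq0 _ _ (hip hV)).
by change (<< x, x >> = 0); rewrite ixx h expr2 mulr0 rmorph0.
Qed.

Lemma CS_B x y :
  complex.Re << x, y >> ^+ 2 + complex.Im << x, y >> ^+ 2 <= (nx x * nx y) ^+ 2.
Proof.
by rewrite exprMn !nx_sq; apply: (CS_form iplin ipherm ippos).
Qed.

Lemma CS_norm x y : `| << x, y >> | <= RC (nx x * nx y).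
Proof.
rewrite normc_def rc_le; apply: sq_le; first by rewrite mulr_ge0 // nx_ge0.
rewrite sqr_sqrtr; first exact: CS_B.
by rewrite addr_ge0 // sqr_ge0.
Qed.

Lemma CS_Re x y : complex.Re << x, y >> <= nx x * nx y.
Proof.
have h := CS_B x y.
apply: sq_le; first by rewrite mulr_ge0 // nx_ge0.
have := sqr_ge0 (complex.Im << x, y >>); lra.
Qed.

Lemma ip_rcZ_l (r : R) x z : << RC r *: x, z >> = RC r * << x, z >>.
Proof. exact: iZ_l. Qed.
Lemma ip_rcZ_r (r : R) x z : << z, RC r *: x >> = RC r * << z, x >>.
Proof. by rewrite iZ_r conj_rc. Qed.

Lemma Re_rcM (r : R) (z : C) : complex.Re (RC r * z) = r * complex.Re z.
Proof. by case: z => a b /=; rewrite mul0r subr0. Qed.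

Lemma herm_real (z : C) : z = z^* -> z = RC (complex.Re z).
Proof.
case: z => a b /= h; apply/eqP; rewrite eq_complex /= eqxx /=.
move: h => /eqP; rewrite eq_complex /= => /andP[_ /eqP hb].
apply/eqP; lra.
Qed.
End Hil.

Set Implicit Arguments.

Lemma quartic_aux (R : realType) (n k P M : R) : 0 <= k -> k <= n -> 0 <= P -> 0 < M ->
  n ^+ 4 <= P * (M * n ^+ 2) -> k ^+ 2 <= P * M.
Proof.
move=> k0 kn P0 M0 h.
have [n0|nz] := eqVneq n 0.
  have -> : k = 0 by rewrite n0 in kn; lra.
  by rewrite expr2 mulr0 mulr_ge0 // ltW.
have n2 : 0 < n ^+ 2 by rewrite exprn_gt0 // lt_neqAle eq_sym nz /=; lra.
have : n ^+ 2 <= P * M.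
  rewrite -(ler_pM2r n2); move: h; rewrite (_ : n ^+ 4 = n ^+ 2 * n ^+ 2); last by ring.
  by rewrite mulrA.
nra.
Qed.

Section Pos.
Variable R : realType.
Local Notation C := R[i].
Local Notation RC x := ((x%:C)%C : C).
Variable V : lmodType C.
Variable hV : hilbert V.
Local Notation "<< x , y >>" := (inner hV x y).
Local Notation nx := (norm_h hV).

Lemma posbelow (T : V -> V) (M g : R) :
  (forall a x y, T (a *: x + y) = a *: T x + T y) ->
  (forall x y, << T x, y >> = << x, T y >>) ->
  (forall x, 0 <= << T x, x >>) ->
  0 < M ->
  (forall u, complex.Re << T u, u >> <= M * nx u ^+ 2) ->
  0 <= g ->
  (forall f, g * nx f <= nx (T f)) ->
  forall f, g ^+ 2 / M * nx f ^+ 2 <= complex.Re << T f, f >>.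
Proof.
move=> Tlin Therm Tpos M0 Tup g0 Tlow f.
pose q x y := << T x, y >>.
have qlin : forall (a : C) x y z, q (a *: x + y) z = a * q x z + q y z.
  by move=> a x y z; rewrite /q Tlin iplin.
have qherm : forall x y, q y x = (q x y)^*.
  by move=> x y; rewrite /q Therm ipherm.
have := CS_form qlin qherm Tpos f (T f).
rewrite /q ixx /= expr0n /= addr0.
have h1 := Tup (T f).
have P0 : 0 <= complex.Re << T f, f >> by apply: ge0_Re.
have h2 : complex.Re << T f, f >> * complex.Re << T (T f), T f >> <=
          complex.Re << T f, f >> * (M * nx (T f) ^+ 2) by rewrite ler_wpM2l.
move=> h3.
have h4 : nx (T f) ^+ 4 <= complex.Re << T f, f >> * (M * nx (T f) ^+ 2).
  by apply: le_trans h2; rewrite -exprM in h3.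
have h5 := quartic_aux (mulr_ge0 g0 (nx_ge0 hV f)) (Tlow f) P0 M0 h4.
rewrite mulrAC ler_pdivrMr // -exprMn; exact: h5.
Qed.
End Pos.

Set Implicit Arguments.

Section Lin.
Variable R : realType.
Local Notation C := R[i].
Variables V W : lmodType C.
Variable T : V -> W.
Hypothesis Tlin : forall a x y, T (a *: x + y) = a *: T x + T y.
Lemma lin0 : T 0 = 0.
Proof.
have := Tlin 1 0 0; rewrite scaler0 addr0 scale1r => /eqP.
by rewrite -subr_eq0 opprD addrA subrr sub0r oppr_eq0 => /eqP.
Qed.
Lemma linZ a x : T (a *: x) = a *: T x.
Proof. by rewrite -(addr0 (a *: x)) Tlin lin0 addr0. Qed.
Lemma linD x y : T (x + y) = T x + T y.
Proof. by rewrite -(scale1r x) Tlin !scale1r. Qed.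
Lemma linN x : T (- x) = - T x.
Proof. by rewrite -scaleN1r linZ scaleN1r. Qed.
Lemma linB x y : T (x - y) = T x - T y.
Proof. by rewrite linD linN. Qed.
End Lin.

Lemma ReD (R : realType) (a b : R[i]) : complex.Re (a + b) = complex.Re a + complex.Re b.
Proof. by case: a; case: b. Qed.
Lemma ReN (R : realType) (a : R[i]) : complex.Re (- a) = - complex.Re a.
Proof. by case: a. Qed.
Lemma ReB (R : realType) (a b : R[i]) : complex.Re (a - b) = complex.Re a - complex.Re b.
Proof. by rewrite ReD ReN. Qed.
Lemma le_rc_Re (R : realType) (a : R) (z : R[i]) : ((a%:C)%C <= z) -> a <= complex.Re z.
Proof. by case: z => x y; rewrite lecE /= => /andP[_ ->]. Qed.
Lemma Re_rc (R : realType) (a : R) : complex.Re ((a%:C)%C : R[i]) = a.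
Proof. by []. Qed.

Section Path.
Variable R : realType.
Local Notation C := R[i].
Local Notation RC x := ((x%:C)%C : C).
Variable V : lmodType C.
Variable hV : hilbert V.
Local Notation "<< x , y >>" := (inner hV x y).
Local Notation nx := (norm_h hV).

Lemma CS_Re_abs x y : `|complex.Re << x, y >>| <= nx x * nx y.
Proof.
have h := CS_B hV x y.
apply: sq_le; first by rewrite mulr_ge0 // nx_ge0.
rewrite real_normK ?num_real //.
have := sqr_ge0 (complex.Im << x, y >>); lra.
Qed.

Lemma lower_div (a u v : R) : 0 <= v -> 0 <= u -> a * v ^+ 2 <= u * v -> a * v <= u.
Proof.
move=> v0 u0 h; have [->|vn] := eqVneq v 0; first by rewrite mulr0.
have vp : 0 < v by rewrite lt_neqAle eq_sym vn.
by rewrite -(ler_pM2r vp) -mulrA -expr2.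
Qed.

Lemma prodpos (X Y : V -> V) (al be MX MY : R) :
  (forall a x y, X (a *: x + y) = a *: X x + X y) ->
  (forall a x y, Y (a *: x + y) = a *: Y x + Y y) ->
  (forall x y, << X x, y >> = << x, X y >>) ->
  (forall x y, << Y x, y >> = << x, Y y >>) ->
  (forall f, X (Y f) = Y (X f)) ->
  0 < al -> 0 < be -> 0 <= MX -> 0 <= MY ->
  (forall f, RC (al * nx f ^+ 2) <= << X f, f >>) ->
  (forall f, RC (be * nx f ^+ 2) <= << Y f, f >>) ->
  (forall f, nx (X f) <= MX * nx f) ->
  (forall f, nx (Y f) <= MY * nx f) ->
  exists c, 0 < c /\ forall f, RC (c * nx f ^+ 2) <= << X (Y f), f >>.
Proof.
move=> Xlin Ylin Xh Yh XY al0 be0 MX0 MY0 Xlo Ylo Xup Yup.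
pose T (t : R) f := RC (1 - t) *: X f + RC t *: X (Y f).
have XYh x y : << X (Y x), y >> = << x, X (Y y) >>.
  by rewrite Xh Yh XY.
have Tlin t a x y : T t (a *: x + y) = a *: T t x + T t y.
  rewrite /T Ylin !Xlin !scalerDr !scalerA !(mulrC (RC _) a) -!scalerA.
  by rewrite !addrA; congr (_ + _); rewrite -!addrA; congr (_ + _); rewrite addrC.
have Th t x y : << T t x, y >> = << x, T t y >>.
  by rewrite /T iD_l iD_r !ip_rcZ_l !ip_rcZ_r Xh XYh.
have Tre t f : complex.Re << T t f, f >> =
    (1 - t) * complex.Re << X f, f >> + t * complex.Re << X (Y f), f >>.
  by rewrite /T iD_l !ip_rcZ_l ReD !Re_rcM.
have Treal t f : << T t f, f >> = RC (complex.Re << T t f, f >>).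
  by apply: herm_real; rewrite -ipherm Th.
have XYreal f : << X (Y f), f >> = RC (complex.Re << X (Y f), f >>).
  by apply: herm_real; rewrite -ipherm XYh.
have XreB f : complex.Re << X f, f >> <= MX * nx f ^+ 2.
  apply: le_trans (CS_Re hV _ _) _; rewrite expr2 mulrA ler_wpM2r //; first exact: nx_ge0.
have XYreB f : `|complex.Re << X (Y f), f >>| <= MX * MY * nx f ^+ 2.
  apply: le_trans (CS_Re_abs _ _) _; rewrite expr2 mulrA ler_wpM2r //; first exact: nx_ge0.
  apply: le_trans (Xup _) _; rewrite -mulrA ler_wpM2l //.
have XreL f : al * nx f ^+ 2 <= complex.Re << X f, f >> by apply: le_rc_Re.
have YreL f : be * nx f ^+ 2 <= complex.Re << Y f, f >> by apply: le_rc_Re.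
pose M := MX + MX * MY + 1.
have M0 : 0 < M by rewrite /M; have := mulr_ge0 MX0 MY0; lra.
pose m := be / (1 + be).
have m0 : 0 < m by rewrite /m divr_gt0 //; lra.
have m1 : m <= 1 by rewrite /m ler_pdivrMr; lra.
have mb : m <= be by rewrite /m ler_pdivrMr; nra.
pose g := al * m.
have g0 : 0 <= g by rewrite /g; apply/ltW/mulr_gt0.
have Tup t u : 0 <= t <= 1 -> complex.Re << T t u, u >> <= M * nx u ^+ 2.
  move=> /andP[t0 t1]; rewrite Tre.
  have h1 := XreB u; have h2 := XYreB u.
  have h3 := ler_norm (complex.Re << X (Y u), u >>).
  have h4 : 0 <= nx u ^+ 2 by exact: sqr_ge0.
  have h5 := mulr_ge0 MX0 MY0.
  set a := complex.Re _ in h1 *; set b := complex.Re _ in h2 h3 *.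
  set n2 := nx u ^+ 2 in h1 h2 h4 *.
  have e1 : (1 - t) * a <= (1 - t) * (MX * n2) by rewrite ler_wpM2l //; lra.
  have e2 : t * b <= t * (MX * MY * n2) by rewrite ler_wpM2l //; lra.
  have e3 : 0 <= t * (MX * n2) by do 2?apply: mulr_ge0.
  have e4 : 0 <= (1 - t) * (MX * MY * n2).
    by apply: mulr_ge0; [lra | do 2?apply: mulr_ge0 => //].
  rewrite /M; nra.
have Tlow t f : 0 <= t <= 1 -> g * nx f <= nx (T t f).
  move=> /andP[t0 t1].
  pose h := RC (1 - t) *: f + RC t *: Y f.
  have -> : T t f = X h by rewrite /T /h (linD Xlin) !(linZ Xlin).
  have hX : al * nx h <= nx (X h).
    apply: lower_div; [exact: nx_ge0 | exact: nx_ge0 |].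
    by apply: le_trans (XreL h) _; apply: CS_Re.
  have hh : m * nx f <= nx h.
    apply: lower_div; [exact: nx_ge0 | exact: nx_ge0 |].
    apply: le_trans (CS_Re hV h f).
    rewrite /h iD_l !ip_rcZ_l ReD !Re_rcM ixx Re_rc.
    have y1 := YreL f; have n20 := sqr_ge0 (nx f).
    set y := complex.Re _ in y1 *; set n2 := nx f ^+ 2 in y1 n20 *.
    have e1 : 0 <= (1 - t) * ((1 - m) * n2) by apply: mulr_ge0; [lra | apply: mulr_ge0 => //; lra].
    have e2 : t * ((be - m) * n2) <= t * (y - m * n2).
      by rewrite ler_wpM2l //; lra.
    have e3 : 0 <= t * ((be - m) * n2) by apply: mulr_ge0 => //; apply: mulr_ge0 => //; lra.
    nra.
  rewrite /g -mulrA; apply: le_trans hX; rewrite ler_wpM2l //; exact: ltW.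
pose c := g ^+ 2 / M.
have Tlb t f : 0 <= t <= 1 -> (forall f, 0 <= complex.Re << T t f, f >>) ->
    c * nx f ^+ 2 <= complex.Re << T t f, f >>.
  move=> tr Q; apply: (posbelow (Tlin t) (Th t)) => //.
  - by move=> x; rewrite Treal ler0c.
  - by move=> u; apply: Tup.
  - by move=> y; apply: Tlow.
have c0 : 0 < c.
  rewrite /c divr_gt0 // exprn_gt0 // /g mulr_gt0 //.
pose N := (Num.truncn (M / c)).+1.
have NM : M / c < N%:R by exact: truncnS_gt.
have N0 : (0 < N)%N by [].
have NR0 : 0 < (N%:R : R) by rewrite ltr0n.
have dM : M / N%:R < c.
  rewrite ltr_pdivrMr // mulrC -ltr_pdivrMr //.
have ind n : (n <= N)%N -> forall f, 0 <= complex.Re << T (n%:R / N%:R) f, f >>.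
  elim: n => [_ f|n IH nN f].
    rewrite mul0r Tre subr0 mul1r mul0r addr0.
    apply: le_trans (XreL f); rewrite mulr_ge0 //; [exact: ltW | exact: sqr_ge0].
  have nN' : (n <= N)%N by apply: leq_trans nN.
  have tr : 0 <= (n%:R / N%:R : R) <= 1.
    apply/andP; split; first by rewrite divr_ge0 // ler0n.
    by rewrite ler_pdivrMr // mul1r ler_nat.
  have h1 := Tlb _ f tr (IH nN').
  move: h1; rewrite !Tre => h1.
  have h2 := XYreB f; have h3 := XreB f.
  have h4 := ler_norm (complex.Re << X (Y f), f >>).
  have h4' := ler_normr (complex.Re << X (Y f), f >>).
  set a := complex.Re << X f, f >> in h1 h3 *.
  set b := complex.Re << X (Y f), f >> in h1 h2 h4 h4' *.
  set n2 := nx f ^+ 2 in h1 h2 h3 *.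
  have n20 : 0 <= n2 by exact: sqr_ge0.
  set t := (n%:R / N%:R : R) in h1 tr *.
  have d0 : 0 < 1 / (N%:R : R) by rewrite divr_gt0.
  have -> : (n.+1%:R / N%:R : R) = t + 1 / N%:R by rewrite /t -mulrDl -natr1 mulrDl mul1r.
  set d := 1 / (N%:R : R) in d0 *.
  have e0 : - (MX * MY * n2) <= b by have := ler_normr b; rewrite ler_norml in h2; case/andP: h2; lra.
  have e1 : d * (- (MX * MY * n2) - MX * n2) <= d * (b - a) by rewrite ler_wpM2l //; [exact: ltW | lra].
  have e2 : M * d <= c by rewrite /d mulrA mulr1 ltW.
  have e3 : M * d * n2 <= c * n2 by rewrite ler_wpM2r.
  have e4 : d * (MX * MY * n2 + MX * n2) <= M * d * n2.
    have dn : 0 <= d * n2 by apply: mulr_ge0 => //; exact: ltW.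
    rewrite /M; nra.
  have e5 : (1 - (t + d)) * a + (t + d) * b = (1 - t) * a + t * b + d * (b - a) by ring.
  rewrite e5; nra.
exists c; split => // f.
have Q1 : forall f, 0 <= complex.Re << T 1 f, f >>.
  by move=> f'; have := ind N (leqnn N) f'; rewrite divff // gt_eqF.
have t1 : 0 <= (1 : R) <= 1 by rewrite ler01 lexx.
have := Tlb 1 f t1 Q1; rewrite Tre subrr mul0r add0r mul1r => h.
by rewrite XYreal rc_le.
Qed.
End Path.

Set Implicit Arguments.

Lemma has_sum_ext (K : numDomainType) (V : zmodType) (nrm : V -> K) I (a b : int -> V) s :
  (forall i, I i -> a i = b i) -> has_sum nrm I a s -> has_sum nrm I b s.
Proof.
move=> eab h e e0; have [F0 [F0I HF]] := h e e0; exists F0; split => // F Fu FI F0F.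
have -> : \sum_(i <- F) b i = \sum_(i <- F) a i.
  by apply: eq_big_seq => i /FI /eab ->.
exact: HF.
Qed.

Lemma join_F0 (I : int -> Prop) (F1 F2 : seq int) :
  (forall i, i \in F1 -> I i) -> (forall i, i \in F2 -> I i) ->
  let F := undup (F1 ++ F2) in
  [/\ uniq F, (forall i, i \in F -> I i), (forall i, i \in F1 -> i \in F) &
     (forall i, i \in F2 -> i \in F)].
Proof.
move=> h1 h2 F; split; first exact: undup_uniq.
- by move=> i; rewrite mem_undup mem_cat => /orP[/h1|/h2].
- by move=> i hi; rewrite mem_undup mem_cat hi.
- by move=> i hi; rewrite mem_undup mem_cat hi orbT.
Qed.

Lemma has_sum_unique (K : numFieldType) I (a : int -> K) s s' :
  has_sum (@Num.norm K K) I a s -> has_sum (@Num.norm K K) I a s' -> s = s'.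
Proof.
move=> h h'; apply/eqP; apply/negPn/negP => ne.
pose e := `|s - s'| / 2.
have e0 : 0 < e by rewrite divr_gt0 // normr_gt0 subr_eq0.
have [F1 [F1I H1]] := h e e0; have [F2 [F2I H2]] := h' e e0.
have [Fu FI F1F F2F] := join_F0 F1I F2I.
set F := undup _ in Fu FI F1F F2F.
have l1 := H1 F Fu FI F1F; have l2 := H2 F Fu FI F2F.
have : `|s - s'| < e + e.
  have -> : s - s' = (\sum_(i <- F) a i - s') - (\sum_(i <- F) a i - s).
    by ring.
  apply: le_lt_trans (ler_normB _ _) _; exact: ltrD.
have -> : e + e = `|s - s'| by rewrite /e; field.
by rewrite ltxx.
Qed.

Lemma has_sum_lin (K : numFieldType) I (a b : int -> K) s t (k : K) :
  has_sum (@Num.norm K K) I a s -> has_sum (@Num.norm K K) I b t ->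
  has_sum (@Num.norm K K) I (fun i => k * a i + b i) (k * s + t).
Proof.
move=> h h' e e0.
pose kk := `|k| + 1.
have kk0 : 0 < kk by rewrite /kk ltr_wpDl.
have e10 : 0 < e / (2 * kk) by rewrite divr_gt0 // mulr_gt0.
have e20 : 0 < e / 2 by rewrite divr_gt0.
have [F1 [F1I H1]] := h _ e10; have [F2 [F2I H2]] := h' _ e20.
have [Fu FI F1F F2F] := join_F0 F1I F2I.
set F := undup _ in Fu FI F1F F2F.
exists F; split => // G Gu GI FG.
have l1 := H1 G Gu GI (fun i hi => FG i (F1F i hi)).
have l2 := H2 G Gu GI (fun i hi => FG i (F2F i hi)).
rewrite big_split /= -mulr_sumr.
have -> : k * \sum_(i <- G) a i + \sum_(i <- G) b i - (k * s + t) =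
  k * (\sum_(i <- G) a i - s) + (\sum_(i <- G) b i - t) by ring.
apply: le_lt_trans (ler_normD _ _) _; rewrite normrM.
have -> : e = kk * (e / (2 * kk)) + e / 2 by field; rewrite gt_eqF.
apply: ler_ltD => //.
have hk1 : `|k| * `|\sum_(i <- G) a i - s| <= `|k| * (e / (2 * kk)).
  by apply: ler_wpM2l => //; exact: ltW.
have hk2 : `|k| * (e / (2 * kk)) <= kk * (e / (2 * kk)).
  by apply: ler_wpM2r; [exact: ltW | rewrite /kk lerDl].
exact: le_trans hk1 hk2.
Qed.

Section HS.
Variable R : realType.
Local Notation C := R[i].
Local Notation RC x := ((x%:C)%C : C).

Lemma pos_C (e : C) : 0 < e -> e = RC (complex.Re e) /\ 0 < complex.Re e.
Proof.
by case: e => a b; rewrite ltcE /= => /andP[/eqP -> h].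
Qed.

Lemma has_sum_rc I (a : int -> R) s :
  has_sum (@Num.norm R R) I a s ->
  has_sum (@Num.norm C C) I (fun i => RC (a i)) (RC s).
Proof.
move=> h e e0; have [-> er] := pos_C e0.
have [F0 [F0I HF]] := h _ er; exists F0; split => // F Fu FI F0F.
rewrite -rmorph_sum -rmorphB normC_rc rc_lt; exact: HF.
Qed.

Lemma has_sum_conj I (a : int -> C) s :
  has_sum (@Num.norm C C) I a s ->
  has_sum (@Num.norm C C) I (fun i => (a i)^*) (s^*).
Proof.
move=> h e e0; have [F0 [F0I HF]] := h _ e0; exists F0; split => // F Fu FI F0F.
by rewrite -rmorph_sum -rmorphB norm_conjC; exact: HF.
Qed.
End HS.

Set Implicit Arguments.

Unset Implicit Arguments.
Section Frame.
Variable R : realType.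
Local Notation C := R[i].
Local Notation RC x := ((x%:C)%C : C).
Variables (H : lmodType C) (hH : hilbert H) (I : int -> Prop)
  (Hi : int -> lmodType C) (hHi : forall i, hilbert (Hi i))
  (L : forall i, H -> Hi i) (S : H -> H) (Ls : forall i, Hi i -> H) (A B : R).
Local Notation "<< x , y >>" := (inner hH x y).
Local Notation nx := (norm_h hH).
Hypothesis Llin : forall i, I i -> forall a x y, L i (a *: x + y) = a *: L i x + L i y.
Hypothesis A0 : 0 < A.
Hypothesis AB : A <= B.
Hypothesis hsum : forall f : H, exists s : R,
    has_sum (@Num.norm R R) I (fun i => norm_h (hHi i) (L i f) ^+ 2) s /\
    A * nx f ^+ 2 <= s /\ s <= B * nx f ^+ 2.
Hypothesis adj : forall i, I i -> is_adjoint hH (hHi i) (L i) (Ls i).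
Hypothesis hsS : forall f : H, has_sum nx I (fun i => Ls i (L i f)) (S f).

Lemma inner_sum (F : seq int) (v : int -> H) g :
  << \sum_(i <- F) v i, g >> = \sum_(i <- F) << v i, g >>.
Proof.
elim: F => [|j F IH]; first by rewrite !big_nil i0_l.
by rewrite !big_cons iD_l IH.
Qed.

Lemma HS1 f g : has_sum (@Num.norm C C) I
   (fun i => inner (hHi i) (L i f) (L i g)) (<< S f, g >>).
Proof.
move=> e e0; have [eE er] := pos_C e0; rewrite eE.
set K := nx g + 1.
have K0 : 0 < K by rewrite /K ltr_wpDl // nx_ge0.
have [F0 [F0I HF]] := hsS f _ (divr_gt0 er K0).
exists F0; split => // F Fu FI F0F.
have -> : \sum_(i <- F) inner (hHi i) (L i f) (L i g) =
          \sum_(i <- F) << Ls i (L i f), g >>.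
  apply: eq_big_seq => i /FI Ii.
  by rewrite [RHS]ipherm -(adj i Ii) -ipherm.
rewrite -inner_sum -iB_l.
apply: le_lt_trans (CS_norm _ _ _) _; rewrite rc_lt.
have h := HF F Fu FI F0F.
set n := nx _ in h *.
have n0 : 0 <= n by exact: nx_ge0.
have g0 := nx_ge0 hH g.
have h1 : n * nx g <= complex.Re e / K * nx g by apply: ler_wpM2r => //; exact: ltW.
apply: le_lt_trans h1 _.
have r0 : 0 < complex.Re e / K by exact: divr_gt0.
have hr : complex.Re e / K * K = complex.Re e by rewrite divfK // gt_eqF.
set r := complex.Re e / K in r0 hr *.
rewrite -hr ltr_pM2l //.
by rewrite /K; lra.
Qed.

Lemma Sherm x y : << S x, y >> = << x, S y >>.
Proof.
rewrite [RHS]ipherm.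
apply: (has_sum_unique (HS1 x y)).
apply: has_sum_ext (has_sum_conj (HS1 y x)) => i _.
by rewrite -ipherm.
Qed.

Lemma Slin a x y : S (a *: x + y) = a *: S x + S y.
Proof.
set d := S (a *: x + y) - (a *: S x + S y).
have hd : forall h, << d, h >> = 0.
  move=> h; rewrite /d iB_l iD_l iZ_l; apply/eqP; rewrite subr_eq0; apply/eqP.
  apply: (has_sum_unique (HS1 (a *: x + y) h)).
  apply: has_sum_ext (has_sum_lin a (HS1 x h) (HS1 y h)) => i Ii.
  by rewrite (Llin i Ii) iplin.
apply/eqP; rewrite -subr_eq0 -/d; apply/eqP.
by apply: (@ip_eq0 _ _ (hip hH)); exact: hd.
Qed.

Lemma Sform f : << S f, f >> = RC (complex.Re << S f, f >>) /\
  A * nx f ^+ 2 <= complex.Re << S f, f >> <= B * nx f ^+ 2.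
Proof.
have [s [hs [s1 s2]]] := hsum f.
have e : << S f, f >> = RC s.
  apply: (has_sum_unique (HS1 f f)).
  apply: has_sum_ext (has_sum_rc hs) => i _.
  by rewrite ixx.
by rewrite e /= s1 s2.
Qed.

Lemma Snorm f : nx (S f) <= B * nx f.
Proof.
have qlin : forall (a : C) x y z, << S (a *: x + y), z >> = a * << S x, z >> + << S y, z >>.
  by move=> a x y z; rewrite Slin iplin.
have qherm : forall x y, << S y, x >> = (<< S x, y >>)^*.
  by move=> x y; rewrite Sherm ipherm.
have qpos : forall x, 0 <= << S x, x >>.
  move=> x; have [-> /andP[h _]] := Sform x; rewrite ler0c.
  by apply: le_trans h; apply: mulr_ge0; [exact: ltW | exact: sqr_ge0].
have := CS_form qlin qherm qpos f (S f).
rewrite ixx /= expr0n /= addr0.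
have [_ /andP[_ u1]] := Sform f; have [_ /andP[_ u2]] := Sform (S f).
have P0 : 0 <= complex.Re << S f, f >> by apply: ge0_Re.
have n0 := nx_ge0 hH (S f); have f0 := nx_ge0 hH f.
have B0 : 0 <= B by apply: le_trans AB; exact: ltW.
move=> h.
have h2 : complex.Re << S f, f >> * complex.Re << S (S f), S f >> <=
   (B * nx f ^+ 2) * (B * nx (S f) ^+ 2).
  apply: ler_pM => //; apply: ge0_Re; exact: qpos.
have h3 : nx (S f) ^+ 2 ^+ 2 <= (B * nx f) ^+ 2 * nx (S f) ^+ 2.
  apply: (le_trans h); apply: (le_trans h2); rewrite le_eqVlt; apply/orP; left; apply/eqP; ring.
apply: sq_le; first exact: mulr_ge0.
have [z|nz] := eqVneq (nx (S f)) 0.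
  by rewrite z expr0n /= sqr_ge0.
have p : 0 < nx (S f) ^+ 2 by rewrite exprn_gt0 // lt_neqAle eq_sym nz.
by rewrite -(ler_pM2r p) -expr2.
Qed.
End Frame.

Set Implicit Arguments.

Section Op.
Variable R : realType.
Local Notation C := R[i].
Local Notation RC x := ((x%:C)%C : C).
Variables (H : lmodType C) (hH : hilbert H).
Local Notation "<< x , y >>" := (inner hH x y).
Local Notation nx := (norm_h hH).

Lemma polar (T : H -> H) :
  (forall a x y, T (a *: x + y) = a *: T x + T y) ->
  (forall f, << T f, f >> = << f, T f >>) ->
  forall x y, << T x, y >> = << x, T y >>.
Proof.
move=> Tlin hr x y.
have e1 := hr (x + y); have e2 := hr (x + 'i *: y).
rewrite !(linD Tlin) !(linZ Tlin) !iD_l !iD_r !iZ_l !iZ_r conjCi (hr x) (hr y) in e1 e2.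
move: e1 e2; set p := << x, T x >>; set q := << y, T y >>.
set a2 := << T x, y >>; set a3 := << T y, x >>; set b2 := << x, T y >>; set b3 := << y, T x >>.
move=> e1 e2.
have i2 : ('i : C) ^+ 2 + 1 = 0 by rewrite sqrCi addNr.
have : 2 * (a2 - b2) = 0.
  have -> : 2 * (a2 - b2) =
     (p + a2 + (a3 + q) - (p + b2 + (b3 + q)))
     + 'i * (p + - 'i * a2 + ('i * a3 + 'i * (- 'i * q))
             - (p + - 'i * b2 + ('i * b3 + 'i * (- 'i * q))))
     + (('i : C) ^+ 2 + 1) * ((a2 - b2) - (a3 - b3)) by ring.
  by rewrite e1 e2 i2 !subrr mulr0 mul0r !addr0.
move/eqP; rewrite mulf_eq0 pnatr_eq0 /= subr_eq0 => /eqP; done.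
Qed.

Lemma GL_props (T : H -> H) : GLplus hH T ->
  [/\ (forall a x y, T (a *: x + y) = a *: T x + T y),
      (forall x y, << T x, y >> = << x, T y >>),
      (exists M, 0 <= M /\ forall f, nx (T f) <= M * nx f) &
      (exists be, 0 < be /\ forall f, RC (be * nx f ^+ 2) <= << T f, f >>)].
Proof.
case=> [[Tlin [M Tb]] [Tp [Ti [[Tilin [Mi Tib]] [TK TiK]]]]].
have Tpos : forall f, 0 <= << T f, f >>.
  move=> f; have [->|nf] := eqVneq f 0; first by rewrite (lin0 Tlin) i0_l.
  by apply: ltW; apply: Tp; apply/eqP.
have hr : forall f, << T f, f >> = << f, T f >>.
  by move=> f; rewrite [RHS]ipherm (ge0_realC (Tpos f)) conj_rc.
have Tb' : forall f, nx (T f) <= `|M| * nx f.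
  move=> f; apply: le_trans (Tb f) _; apply: ler_wpM2r; [exact: nx_ge0 | exact: ler_norm].
split => //; first exact: polar.
  by exists `|M|; split.
have M0 : 0 < `|M| + 1 by rewrite ltr_wpDl.
have Mi0 : 0 < `|Mi| + 1 by rewrite ltr_wpDl.
pose g := 1 / (`|Mi| + 1).
have g0 : 0 < g by rewrite divr_gt0.
exists (g ^+ 2 / (`|M| + 1)); split; first by rewrite divr_gt0 // exprn_gt0.
move=> f.
have hp := posbelow Tlin (polar Tlin hr) Tpos M0 _ (ltW g0) _ f.
rewrite (ge0_realC (Tpos f)) rc_le; apply: hp.
- move=> u; apply: le_trans (CS_Re hH _ _) _.
  have := Tb' u; have := nx_ge0 hH u; have := nx_ge0 hH (T u); have := normr_ge0 M.
  nra.
- move=> h.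
  have h1 := Tib (T h); rewrite TK in h1.
  have h2 : Mi * nx (T h) <= (`|Mi| + 1) * nx (T h).
    apply: ler_wpM2r; first exact: nx_ge0.
    have := ler_norm Mi; lra.
  rewrite /g div1r mulrC ler_pdivrMr // mulrC.
  exact: le_trans h1 h2.
Qed.
End Op.

Unset Implicit Arguments.
Set Strict Implicit.

Theorem mainTheorem2 (R : realType)
  (H : lmodType R[i]) (hH : hilbert H)
  (I : int -> Prop)
  (Hi : int -> lmodType R[i]) (hHi : forall i, hilbert (Hi i))
  (L : forall i, H -> Hi i)
  (S : H -> H) (Cop C'op : H -> H) :
  g_frame hH I hHi L ->
  g_frame_operator hH I hHi L S ->
  GLplus hH Cop -> GLplus hH C'op ->
  (forall f, Cop (C'op f) = C'op (Cop f)) ->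
  (forall f, Cop (S f) = S (Cop f)) ->
  (forall f, C'op (S f) = S (C'op f)) ->
  controlled_g_frame hH I hHi L Cop C'op.
Proof.
move=> [Lb [A [B [A0 [AB hsum]]]]] [Ls [adj hsS]] GC GC' CC' CS C'S.
have Llin : forall i, I i -> forall a x y, L i (a *: x + y) = a *: L i x + L i y.
  by move=> i Ii; case: (Lb i Ii).
have [Clin Cherm [MC [MC0 Cb]] [bC [bC0 Clo]]] := GL_props GC.
have [C'lin C'herm [MC' [MC'0 C'b]]  [bC' [bC'0 C'lo]]] := GL_props GC'.
have Slin := @Slin R H hH I Hi hHi L S Ls Llin adj hsS.
have Sherm := @Sherm R H hH I Hi hHi L S Ls adj hsS.
have Sform := @Sform R H hH I Hi hHi L S Ls A B hsum adj hsS.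
have Snorm := @Snorm R H hH I Hi hHi L S Ls A B Llin A0 AB hsum adj hsS.
have B0 : 0 <= B by apply: le_trans AB; exact: ltW.
have Slo : forall f, ((A * norm_h hH f ^+ 2)%:C)%C <= inner hH (S f) f.
  by move=> f; have [e /andP[h _]] := Sform f; rewrite e rc_le.
have [c1 [c10 h1]] := prodpos Slin Clin Sherm Cherm (fun f => esym (CS f))
   A0 bC0 B0 MC0 Slo Clo Snorm Cb.
have SClin : forall a x y, S (Cop (a *: x + y)) = a *: S (Cop x) + S (Cop y).
  by move=> a x y; rewrite Clin Slin.
have SCherm : forall x y, inner hH (S (Cop x)) y = inner hH x (S (Cop y)).
  by move=> x y; rewrite Sherm Cherm CS.
have SCC' : forall f, S (Cop (C'op f)) = C'op (S (Cop f)).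
  by move=> f; rewrite CC' C'S.
have SCb : forall f, norm_h hH (S (Cop f)) <= (B * MC) * norm_h hH f.
  move=> f; apply: le_trans (Snorm _) _; rewrite -mulrA; apply: ler_wpM2l => //.
have [c2 [c20 h2]] := prodpos SClin C'lin SCherm C'herm SCC'
   c10 bC'0 (mulr_ge0 B0 MC0) MC'0 h1 C'lo SCb C'b.
split.
  split => //; exists B => f.
  have [s [hs [_ s2]]] := hsum f; exists s; split => //.
exists c2, (B * MC * MC'); split => // f.
exists (inner hH (S (Cop f)) (C'op f)); split.
  exact: (@HS1 R H hH I Hi hHi L S Ls adj hsS).
have -> : inner hH (S (Cop f)) (C'op f) = inner hH (S (Cop (C'op f))) f.
  by rewrite -C'herm SCC'.
have lo := h2 f; split => //.
move: lo; set z := inner hH _ f => lo.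
have zr : z = ((complex.Re z)%:C)%C.
  by move: lo; case: (z) => a b; rewrite lecE /= => /andP[/eqP -> _].
rewrite zr rc_le.
apply: le_trans (CS_Re hH _ _) _.
have := SCb (C'op f); have := C'b f; have := nx_ge0 hH f.
have := nx_ge0 hH (C'op f); have := nx_ge0 hH (S (Cop (C'op f))).
have BM : 0 <= B * MC by exact: mulr_ge0.
move=> n1 n2 n3 e1 e2.
have e3 : B * MC * norm_h hH (C'op f) <= B * MC * (MC' * norm_h hH f) by apply: ler_wpM2l.
have e4 : norm_h hH (S (Cop (C'op f))) * norm_h hH f <= B * MC * (MC' * norm_h hH f) * norm_h hH f.
  by apply: ler_wpM2r => //; apply: le_trans e2 e3.
apply: le_trans e4 _; rewrite le_eqVlt; apply/orP; left; apply/eqP; ring.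
Qed.
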